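(* Let $\mathcal{A}\subseteq\wp(\mathcal{G})$. (1) If $\emptyset\notin\mathrm{Ext}(\mathcal{A})$, then $\mathrm{Ext}(\mathcal{A})$ is coherent, $\mathcal{A}\subseteq\mathrm{Ext}(\mathcal{A})$, and $\mathrm{Ext}(\mathcal{A})\subseteq\mathcal{K}$ for every coherent $\mathcal{K}\subseteq\wp(\mathcal{G})$ with $\mathcal{A}\subseteq\mathcal{K}$; i.e. $\mathrm{Ext}(\mathcal{A})$ is the minimal coherent set extending $\mathcal{A}$. (2) If $\emptyset\in\mathrm{Ext}(\mathcal{A})$, then there is no coherent $\mathcal{K}\subseteq\wp(\mathcal{G})$ with $\mathcal{A}\subseteq\mathcal{K}$.
   Context: $\Omega$ is a non-empty set and $\mathcal{G}$ is the set of bounded functions $\Omega\to\mathbb{R}$. $f\geq g$ means pointwise $\geq$; $f\gneq g$ means $f\geq g$ and $f\neq g$; $\mathcal{G}_{\gneq 0}=\{f: f\gneq 0\}$. $\mathrm{posi}(B)=\{\sum_{i=1}^m\lambda_i h_i: m\geq1,\lambda_i>0,h_i\in B\}$, and $\mathcal{E}(E):=\mathrm{posi}(E\cup\mathcal{G}_{\gneq 0})$. A set $\mathcal{K}\subseteq\wp(\mathcal{G})$ is coherent if: (K$_\emptyset$) $\emptyset\notin\mathcal{K}$; (K$_0$) if $A\in\mathcal{K}$ then $A\setminus\{0\}\in\mathcal{K}$; (K$_{\gneq0}$) if $g\in\mathcal{G}_{\gneq0}$ then $\{g\}\in\mathcal{K}$; (K$_\supseteq$) if $A\in\mathcal{K}$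 and $B\supseteq A$ then $B\in\mathcal{K}$; (K$_{\mathrm{Dom}}$) if $A\in\mathcal{K}$ and for each $g\in A$, $f_g$ is a gamble with $f_g\geq g$, then $\{f_g: g\in A\}\in\mathcal{K}$; (K$_{\mathrm{Add}}$) if $A_1,\ldots,A_n\in\mathcal{K}$ (finitely many) and for each $\langle g_1,\ldots,g_n\rangle\in A_1\times\cdots\times A_n$, $f_{\langle g_1,\ldots,g_n\rangle}$ is some member of $\mathrm{posi}(\{g_1,\ldots,g_n\})$, then $\{f_{\langle g_1,\ldots,g_n\rangle}:\langle g_1,\ldots,g_n\rangle\in A_1\times\cdots\times A_n\}\in\mathcal{K}$. Definition of $\mathrm{Ext}$: if $\mathcal{A}\neq\emptyset$, $B\in\mathrm{Ext}(\mathcal{A})$ iff there are finitely many $A_1,\ldots,A_n\in\mathcal{A}$ ($n\geq1$) such that for each $\langle g_1,\ldots,g_n\rangle\in A_1\times\cdots\times A_n$ with $0\notin\mathcal{E}(\{g_1,\ldots,g_n\})$, there is some $f\in B$ with $f\in\mathcal{E}(\{g_1,\ldots,g_n\})$. If $\mathcal{A}=\emptyset$, $B\in\mathrm{Ext}(\emptyset)$ iff $B\cap\mathcal{G}_{\gneq0}\neq\emptyset$. *)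

(* Defs.v *)
From HB Require Import structures.
From mathcomp Require Import all_boot all_order all_algebra.
From mathcomp Require Import classical_sets reals.
Set Implicit Arguments. Unset Strict Implicit. Unset Printing Implicit Defensive.
Import Order.TTheory GRing.Theory Num.Theory.
Local Open Scope classical_set_scope.
Local Open Scope ring_scope.

Section Gambles.
Variables (Omega : Type) (R : realType).

Definition bounded_fun (f : Omega -> R) : Prop :=
  exists M : R, forall w, `|f w| <= M.

Definition gamble := {f : Omega -> R | bounded_fun f}.

Definition gval (g : gamble) : Omega -> R := proj1_sig g.

Lemma bounded_zero : bounded_fun (fun _ => 0).
Proof. by exists 0 => w; rewrite normr0. Qed.

Definition gzero : gamble := exist _ (fun _ => 0) bounded_zero.

Definition gge (f g : gamble) : Prop := forall w, gval g w <= gval f w.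

Definition Gpos : set gamble :=
  [set f | gge f gzero /\ f <> gzero].

Definition posi (B : set gamble) : set gamble :=
  [set f | exists (m : nat) (lam : 'I_m.+1 -> R) (h : 'I_m.+1 -> gamble),
     (forall i, 0 < lam i) /\ (forall i, B (h i)) /\
     (forall w, gval f w = \sum_(i < m.+1) lam i * gval (h i) w)].

Definition natext (E : set gamble) : set gamble := posi (E `|` Gpos).

Definition coherent (K : set (set gamble)) : Prop :=
  ~ K set0 /\
  (forall A, K A -> K (A `\` [set gzero])) /\
  (forall g, Gpos g -> K [set g]) /\
  (forall A B, K A -> A `<=` B -> K B) /\
  (forall A (f : gamble -> gamble), K A ->
                 (forall g, A g -> gge (f g) g) -> K (f @` A)) /\
  (forall (n : nat) (As : 'I_n -> set gamble)
                 (F : ('I_n -> gamble) -> gamble),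
                 (forall i, K (As i)) ->
                 (forall g : 'I_n -> gamble, (forall i, As i (g i)) ->
                    posi (range g) (F g)) ->
                 K (F @` [set g : 'I_n -> gamble | forall i, As i (g i)])).

Definition Ext (A : set (set gamble)) : set (set gamble) :=
  [set B | (A = set0 -> (B `&` Gpos) !=set0) /\
           (A !=set0 ->
              exists (n : nat) (As : 'I_n.+1 -> set gamble),
                (forall i, A (As i)) /\
                (forall g : 'I_n.+1 -> gamble, (forall i, As i (g i)) ->
                   ~ natext (range g) gzero ->
                   exists f, B f /\ natext (range g) f))].

End Gambles.

(* Main.v *)
Require Import Defs.
From HB Require Import structures.
From mathcomp Require Import all_boot all_order all_algebra.
From mathcomp Require Import boolp classical_sets reals lra.
Set Implicit Arguments. Unset Strict Implicit. Unset Printing Implicit Defensive.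
Import Order.TTheory GRing.Theory Num.Theory.
Local Open Scope classical_set_scope.
Local Open Scope ring_scope.

Section S.
Variables (Omega : Type) (R : realType).
Local Notation G := (gamble Omega R).
Local Notation gz := (gzero Omega R).
Local Notation Gp := (@Gpos Omega R).

Lemma gambleP (f g : G) : (forall w, gval f w = gval g w) -> f = g.
Proof. case: f g => [f hf] [g hg] /= H; apply: eq_exist; exact: funext. Qed.

Lemma bounded_add (f g : Omega -> R) :
  bounded_fun f -> bounded_fun g -> bounded_fun (fun w => f w + g w).
Proof.
move=> [M hM] [N hN]; exists (M + N) => w.
apply: le_trans (ler_normD _ _) _; exact: lerD.
Qed.

Lemma bounded_scale c (f : Omega -> R) :
  bounded_fun f -> bounded_fun (fun w => c * f w).
Proof.
move=> [M hM]; exists (`|c| * M) => w; rewrite normrM.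
by apply: ler_wpM2l.
Qed.

Lemma bounded_one : bounded_fun (fun _ : Omega => (1 : R)).
Proof. by exists 1 => w; rewrite normr1. Qed.

Definition gadd (f g : G) : G :=
  exist _ _ (bounded_add (proj2_sig f) (proj2_sig g)).
Definition gscale c (f : G) : G := exist _ _ (bounded_scale c (proj2_sig f)).
Definition gone : G := exist _ _ bounded_one.

Lemma Gpos_pt f : Gp f -> (forall w, 0 <= gval f w) /\ exists w, 0 < gval f w.
Proof.
case=> ge fn; split=> [w|]; first exact: ge.
apply: contrapT => hn; apply: fn; apply: gambleP => w /=.
apply/eqP; rewrite eq_le ge andbT leNgt; apply/negP => h; apply: hn; by exists w.
Qed.

Lemma Gpos_mk f : (forall w, 0 <= gval f w) -> (exists w, 0 < gval f w) -> Gp f.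
Proof.
move=> ge [w hw]; split; first exact: ge.
by move=> e; move: hw; rewrite e /= ltxx.
Qed.

Lemma Gpos_gz : ~ Gp gz.
Proof. by case. Qed.

Lemma posi_base (X : set G) c x y : X x -> 0 < c ->
  (forall w, gval y w = c * gval x w) -> posi X y.
Proof.
move=> Xx c0 E; exists 0%N, (fun _ => c), (fun _ => x); split=> //; split=> // w.
by rewrite big_ord1 E.
Qed.

Lemma posi_add (X : set G) a b y : posi X a -> posi X b ->
  (forall w, gval y w = gval a w + gval b w) -> posi X y.
Proof.
move=> [m1 [l1 [h1 [l1p [h1X E1]]]]] [m2 [l2 [h2 [l2p [h2X E2]]]]] E.
exists (m1 + m2.+1)%N.
pose l (i : 'I_(m1.+1 + m2.+1)) := match split i with inl j => l1 j | inr j => l2 j end.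
pose h (i : 'I_(m1.+1 + m2.+1)) := match split i with inl j => h1 j | inr j => h2 j end.
exists l, h; split; [|split].
- by move=> i; rewrite /l; case: split.
- by move=> i; rewrite /h; case: split.
- move=> w; rewrite E E1 E2.
  have -> : \sum_(i < (m1 + m2.+1).+1) l i * gval (h i) w =
            \sum_(i < m1.+1 + m2.+1) l i * gval (h i) w by [].
  rewrite big_split_ord /=.
  have sl : forall j, split (lshift m2.+1 j) = inl j := fun j => unsplitK (inl j).
  have sr : forall j, split (rshift m1.+1 j) = inr j := fun j => unsplitK (inr j).
  by congr (_ + _); apply: eq_bigr => i _; rewrite /l /h ?sl ?sr.
Qed.

Lemma posi_scale (X : set G) c a y : 0 < c -> posi X a ->
  (forall w, gval y w = c * gval a w) -> posi X y.
Proof.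
move=> c0 [m [l [h [lp [hX E]]]]] Ey.
exists m, (fun i => c * l i), h; split; [|split] => //.
- by move=> i; apply: mulr_gt0.
- by move=> w; rewrite Ey E mulr_sumr; apply: eq_bigr => i _; rewrite mulrA.
Qed.

Lemma posi_ind (X : set G) (P : G -> Prop) :
  (forall c x, 0 < c -> X x -> P (gscale c x)) ->
  (forall a b, P a -> P b -> P (gadd a b)) ->
  forall f, posi X f -> P f.
Proof.
move=> Hb Ha f [m [l [h [lp [hX E]]]]].
suff [y [Ey Py]] : exists y : G,
    (forall w, gval y w = \sum_(i < m.+1) l i * gval (h i) w) /\ P y.
  by have -> : f = y by apply: gambleP => w; rewrite E Ey.
elim: m l h lp hX {E} => [|m IH] l h lp hX.
  exists (gscale (l ord0) (h ord0)); split; last exact: Hb.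
  by move=> w; rewrite big_ord1.
have [y [Ey Py]] := IH (fun i => l (lift ord0 i)) (fun i => h (lift ord0 i))
  (fun i => lp _) (fun i => hX _).
exists (gadd (gscale (l ord0) (h ord0)) y); split; last by apply: Ha => //; apply: Hb.
by move=> w; rewrite big_ord_recl -Ey.
Qed.

Lemma posi_mono (X Y : set G) : X `<=` Y -> posi X `<=` posi Y.
Proof.
move=> XY f [m [l [h [lp [hX E]]]]]; exists m, l, h; split=> //; split=> // i.
exact: XY.
Qed.

Lemma posi_idem (X : set G) : posi (posi X) `<=` posi X.
Proof.
apply: posi_ind => [c x c0 Px|a b Pa Pb].
  by apply: (posi_scale c0 Px).
by apply: (posi_add Pa Pb).
Qed.

Lemma posi_Gpos : posi Gp `<=` Gp.
Proof.
apply: posi_ind => [c x c0 /Gpos_pt [ge [w hw]]|a b /Gpos_pt [ga [w hw]] /Gpos_pt [gb _]].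
  apply: Gpos_mk.
    move=> v /=; apply: mulr_ge0; [exact: ltW | exact: ge].
  by exists w => /=; apply: mulr_gt0.
apply: Gpos_mk.
  by move=> v /=; apply: addr_ge0; [exact: ga|exact: gb].
exists w => /=; have h1 := gb w; rewrite /gval in hw h1 *; lra.
Qed.

Lemma posi_empty (X : set G) f : (forall x, ~ X x) -> ~ posi X f.
Proof. by move=> nX [m [l [h [_ [hX _]]]]]; apply: (nX _ (hX ord0)). Qed.

Lemma natext_X (X : set G) x : X x -> natext X x.
Proof. by move=> Xx; apply: (@posi_base _ 1 x) => //; [left | move=> w; rewrite mul1r]. Qed.

Lemma natext_Gp (X : set G) x : Gp x -> natext X x.
Proof. by move=> Xx; apply: (@posi_base _ 1 x) => //; [right | move=> w; rewrite mul1r]. Qed.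

Lemma natext_mono (X Y : set G) : X `<=` Y -> natext X `<=` natext Y.
Proof. by move=> XY; apply: posi_mono => x [/XY|]; [left|right]. Qed.

Lemma natext_idem (X : set G) : posi (natext X) `<=` natext X.
Proof. exact: posi_idem. Qed.

Lemma posi_self (X : set G) x : X x -> posi X x.
Proof. by move=> Xx; apply: (posi_base Xx ltr01) => w; rewrite mul1r. Qed.

Lemma gge_refl (f : G) : gge f f.
Proof. by move=> w. Qed.

Lemma natext_dec (X : set G) f : natext X f ->
  Gp f \/ exists g, posi X g /\ gge f g.
Proof.
move: f; apply: (posi_ind (P := fun f => Gp f \/ exists g, posi X g /\ gge f g)).
  move=> c x c0 [Xx|Gx].
    right; exists (gscale c x); split; last exact: gge_refl.
    by apply: (posi_base Xx c0).
  by left; apply: posi_Gpos; apply: (posi_base Gx c0).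
move=> a b [Ga|[g [Pg ga]]] [Gb|[g' [Pg' gb]]].
- left; apply: posi_Gpos; apply: (posi_add (posi_self Ga) (posi_self Gb)) => //.
- right; exists g'; split=> // w; have h1 := gb w; have h2 := (Gpos_pt Ga).1 w.
  rewrite /gval /= in h1 h2 *; lra.
- right; exists g; split=> // w; have h1 := ga w; have h2 := (Gpos_pt Gb).1 w.
  rewrite /gval /= in h1 h2 *; lra.
- right; exists (gadd g g'); split; first by apply: (posi_add Pg Pg').
  move=> w; have h1 := ga w; have h2 := gb w.
  rewrite /gval /= in h1 h2 *; lra.
Qed.

Lemma natext0 (X : set G) : natext X gz -> exists g, posi X g /\ gge gz g.
Proof. by case/natext_dec => // /Gpos_gz. Qed.

Lemma natext_up (X : set G) b c : natext X b -> gge c b -> natext X c.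
Proof.
move=> Nb cb; case: (pselect (c = b)) => [->//|ne].
pose d := gadd c (gscale (-1) b).
have Gd : Gp d.
  apply: Gpos_mk => [w|]; first by have := cb w; rewrite /gval /=; lra.
  apply: contrapT => hn; apply: ne; apply: gambleP => w.
  apply/eqP; rewrite eq_le cb andbT leNgt; apply/negP => h; apply: hn; exists w.
  by move: h; rewrite /gval /=; lra.
apply: (posi_add Nb (natext_Gp X Gd)) => w; rewrite /gval /=; lra.
Qed.


Definition Ext2 (A : set (set G)) (B : set G) :=
  exists (n : nat) (As : 'I_n.+1 -> set G),
    (forall i, A (As i)) /\
    (forall g : 'I_n.+1 -> G, (forall i, As i (g i)) ->
       ~ natext (range g) gz -> exists f, B f /\ natext (range g) f).

Lemma Ext0 (B : set G) : Ext (set0 : set (set G)) B <-> (B `&` Gp) !=set0.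
Proof. by split; [case=> H _; exact: H | move=> H; split=> // -[]]. Qed.

Lemma ExtN (A : set (set G)) B : A !=set0 -> (Ext A B <-> Ext2 A B).
Proof.
move=> hA; split; first by case=> _ H; exact: H.
move=> H; split=> // H0; exfalso; move: hA; rewrite H0; by case.
Qed.

Lemma set0_dec (A : set (set G)) : A = set0 \/ A !=set0.
Proof. by case: (pselect (A = set0)) => [|/eqP/set0P]; [left|right]. Qed.

Lemma Ext_K0 (A : set (set G)) B : Ext A B -> Ext A (B `\` [set gz]).
Proof.
case: (set0_dec A) => [->|hA].
  rewrite !Ext0 => -[x [Bx Gx]]; exists x; split=> //; split=> //= xz.
  by case: Gx.
rewrite !ExtN // => -[n [As [HA HB]]]; exists n, As; split=> // g sel nz.
have [f [Bf Nf]] := HB g sel nz; exists f; split=> //; split=> //= fz.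
by apply: nz; rewrite -fz.
Qed.

Lemma Ext_Kpos (A : set (set G)) g : Gp g -> Ext A [set g].
Proof.
move=> Gg; case: (set0_dec A) => [->|hA].
  by rewrite Ext0; exists g.
rewrite ExtN //; case: hA => B0 AB0; exists 0%N, (fun _ => B0); split=> // h _ _.
by exists g; split=> //; apply: natext_Gp.
Qed.

Lemma Ext_Ksup (A : set (set G)) B C : Ext A B -> B `<=` C -> Ext A C.
Proof.
move=> EB BC; case: (set0_dec A) EB => [->|hA].
  by rewrite !Ext0 => -[x [Bx Gx]]; exists x; split=> //; apply: BC.
rewrite !ExtN // => -[n [As [HA HB]]]; exists n, As; split=> // g sel nz.
have [f [Bf Nf]] := HB g sel nz; exists f; split=> //; exact: BC.
Qed.

Lemma Ext_Kdom (A : set (set G)) B (f : G -> G) : Ext A B -> (forall g, B g -> gge (f g) g) ->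
  Ext A (f @` B).
Proof.
move=> EB Hf; case: (set0_dec A) EB => [->|hA].
  rewrite !Ext0 => -[p [Bp Gpp]]; exists (f p); split; first by exists p.
  have [ge [w hw]] := Gpos_pt Gpp.
  apply: Gpos_mk => [v|]; first exact: le_trans (ge v) (Hf p Bp v).
  by exists w; apply: lt_le_trans hw (Hf p Bp w).
rewrite !ExtN // => -[n [As [HA HB]]]; exists n, As; split=> // g sel nz.
have [b [Bb Nb]] := HB g sel nz; exists (f b); split; first by exists b.
exact: natext_up Nb (Hf b Bb).
Qed.

Lemma Ext_incl (A : set (set G)) : A `<=` Ext A.
Proof.
move=> B AB; have hA : A !=set0 by exists B.
rewrite ExtN //; exists 0%N, (fun _ => B); split=> // g sel _.
by exists (g ord0); split; [exact: sel | apply: natext_X; exists ord0].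
Qed.


Lemma Ext_Kadd (A : set (set G)) (n : nat) (Bs : 'I_n -> set G) (F : ('I_n -> G) -> G) :
  (forall i, Ext A (Bs i)) ->
  (forall g : 'I_n -> G, (forall i, Bs i (g i)) -> posi (range g) (F g)) ->
  Ext A (F @` [set g : 'I_n -> G | forall i, Bs i (g i)]).
Proof.
case: n Bs F => [|k] Bs F EB HF.
  exfalso; have sel : forall i : 'I_0, Bs i gz by case.
  have := HF (fun _ => gz) sel; apply: posi_empty.
  by move=> x [[]].
case: (set0_dec A) EB => [->|hA] EB.
  have EB' : forall i, exists p, Bs i p /\ Gp p.
    by move=> i; have [p ?] := (Ext0 _).1 (EB i); exists p.
  have [p Hp] := choice EB'.
  rewrite Ext0; exists (F p); split; first by exists p => // i; exact: (Hp i).1.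
  apply: posi_Gpos; apply: posi_mono (HF p (fun i => (Hp i).1)).
  by move=> x [i _ <-]; exact: (Hp i).2.
have EB' : forall i, exists S : {m : nat & 'I_m.+1 -> set G},
    (forall j, A (projT2 S j)) /\
    (forall g : 'I_(projT1 S).+1 -> G, (forall j, projT2 S j (g j)) ->
       ~ natext (range g) gz -> exists f, Bs i f /\ natext (range g) f).
  move=> i; have [m [As [HA HB]]] := (ExtN _ hA).1 (EB i).
  by exists (existT _ m As).
have [S HS] := choice EB'.
pose N i := projT1 (S i).
pose I := {i : 'I_k.+1 & 'I_(N i).+1}.
pose Cs (x : I) := projT2 (S (tag x)) (tagged x).
pose x0 : I := existT (fun i => 'I_(N i).+1) ord0 ord0.
have cardI : #|{: I}| = (#|{: I}|.-1).+1.
  by rewrite prednK //; apply/card_gt0P; exists x0.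
set M := #|{: I}|.-1 in cardI.
pose hI (i : 'I_M.+1) : I := nth x0 (enum {: I}) i.
have hinv : forall x : I, exists i : 'I_M.+1, hI i = x.
  move=> x; have hlt : (index x (enum {: I}) < M.+1)%N.
    by rewrite -cardI cardE index_mem mem_enum.
  by exists (Ordinal hlt); rewrite /hI /= nth_index // mem_enum.
have [inv Hinv] := choice hinv.
rewrite ExtN //; exists M, (fun i => Cs (hI i)); split.
  by move=> i; rewrite /Cs; exact: (HS _).1.
move=> gam sel nz.
pose g (x : I) := gam (inv x).
have selg : forall x, Cs x (g x) by move=> x; have := sel (inv x); rewrite Hinv.
have rg : range g `<=` range gam by move=> y [x _ <-]; exists (inv x).
have Hf : forall i, exists f, Bs i f /\ natext (range gam) f.
  move=> i; pose gi (j : 'I_(N i).+1) := g (existT _ i j).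
  have seli : forall j, projT2 (S i) j (gi j) := fun j => selg (existT _ i j).
  have rgi : range gi `<=` range gam.
    by move=> y [j _ <-]; apply: rg; exists (existT _ i j).
  have nzi : ~ natext (range gi) gz.
    by move=> h; apply: nz; exact: natext_mono rgi _ h.
  have [f [Bf Nf]] := (HS i).2 gi seli nzi; exists f; split=> //.
  exact: natext_mono rgi _ Nf.
have [fs Hfs] := choice Hf.
exists (F fs); split; first by exists fs => // i; exact: (Hfs i).1.
apply: natext_idem; apply: posi_mono (HF fs (fun i => (Hfs i).1)).
by move=> y [i _ <-]; exact: (Hfs i).2.
Qed.

Lemma Ext_min (HO : inhabited Omega) (A : set (set G)) (K : set (set G)) :
  coherent K -> A `<=` K -> Ext A `<=` K.
Proof.
move=> [K0 [K00 [Kp [Ksup [Kdom Kadd]]]]] AK B.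
case: (set0_dec A) => [->|hA].
  rewrite Ext0 => -[p [Bp Gpp]]; apply: Ksup (Kp p Gpp) _; by move=> x ->.
rewrite ExtN // => -[n [As [HA HB]]].
pose Q := [set q | Gp q /\ (B q \/ ~ ((B `&` Gp) !=set0))].
have KQ : K Q.
  case: (pselect ((B `&` Gp) !=set0)) => [[p [Bp Gpp]]|nB].
    by apply: Ksup (Kp p Gpp) _ => x ->; split=> //; left.
  have G1 : Gp gone.
    case: HO => w; apply: Gpos_mk => [v|]; [exact: ler01 | exists w; exact: ltr01].
  by apply: Ksup (Kp _ G1) _ => x ->; split=> //; right.
pose As' (i : 'I_n.+2) := if (i < n.+1)%N then As (inord i) else Q.
have KAs' : forall i, K (As' i).
  by move=> i; rewrite /As'; case: ifP => _; [apply: AK; apply: HA | exact: KQ].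
pose r (g' : 'I_n.+2 -> G) (j : 'I_n.+1) := g' (widen_ord (leqnSn n.+1) j).
have selr : forall g', (forall i, As' i (g' i)) -> forall j, As j (r g' j).
  move=> g' s j; have := s (widen_ord (leqnSn n.+1) j).
  by rewrite /As' /= ltn_ord inord_val.
have selQ : forall g', (forall i, As' i (g' i)) -> Q (g' ord_max).
  by move=> g' s; have := s ord_max; rewrite /As' /= ltnn.
have rr : forall g', range (r g') `<=` range g'.
  by move=> g' y [j _ <-]; exists (widen_ord (leqnSn n.+1) j).
have HF : forall g', exists G0, (forall i, As' i (g' i)) ->
    posi (range g') G0 /\ (gge gz G0 \/ exists b, B b /\ gge b G0).
  move=> g'; case: (pselect (forall i, As' i (g' i))) => [s|ns]; last by exists gz.
  case: (pselect (natext (range (r g')) gz)) => [N0|nz].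
    have [g0 [Pg0 g0le]] := natext0 N0; exists g0 => _.
    by split; [exact: posi_mono (rr g') _ Pg0 | left].
  have [f [Bf Nf]] := HB (r g') (selr g' s) nz.
  case: (natext_dec Nf) => [Gf|[g0 [Pg0 g0le]]].
    have [Gq [Bq|nB]] := selQ g' s; last by exfalso; apply: nB; exists f.
    exists (g' ord_max) => _; split; first by apply: posi_self; exists ord_max.
    by right; exists (g' ord_max); split=> //; exact: gge_refl.
  exists g0 => _; split; [exact: posi_mono (rr g') _ Pg0 | by right; exists f].
have [F HFF] := choice HF.
have KS := Kadd n.+2 As' F KAs' (fun g' s => (HFF g' s).1).
have HD : forall h : G, exists y, gge y h /\
    ((gge gz h \/ exists b, B b /\ gge b h) -> y = gz \/ B y).
  move=> h; case: (pselect (gge gz h)) => [hz|nhz].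
    by exists gz; split=> // _; left.
  case: (pselect (exists b, B b /\ gge b h)) => [[b [Bb bh]]|nb].
    by exists b; split=> // _; right.
  by exists h; split; [exact: gge_refl | case].
have [D HDD] := choice HD.
have KD := Kdom _ D KS (fun h _ => (HDD h).1).
apply: Ksup (K00 _ KD) _ => y [[h [g' sg' <-] <-] nz].
by case: ((HDD (F g')).2 (HFF g' sg').2) => // e; exfalso; exact: nz e.
Qed.

Lemma Ext_empty (A : set (set G)) :
  Ext A set0 -> ~ exists K, coherent K /\ A `<=` K.
Proof.
move=> E0 [K [[K0 [K00 [Kp [Ksup [Kdom Kadd]]]]] AK]].
case: (set0_dec A) E0 => [->|hA]; first by rewrite Ext0 => -[x []].
rewrite ExtN // => -[n [As [HA HB]]].
have HF : forall g : 'I_n.+1 -> G, exists G0,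
    (forall i, As i (g i)) -> posi (range g) G0 /\ gge gz G0.
  move=> g; case: (pselect (forall i, As i (g i))) => [s|ns]; last by exists gz.
  case: (pselect (natext (range g) gz)) => [N0|nz]; last by have [f []] := HB g s nz.
  by have [g0 [Pg0 g0le]] := natext0 N0; exists g0.
have [F HFF] := choice HF.
have KS := Kadd n.+1 As F (fun i => AK _ (HA i)) (fun g s => (HFF g s).1).
have Hle : forall h, (F @` [set g | forall i, As i (g i)]) h -> gge gz h.
  by move=> h [g s <-]; exact: (HFF g s).2.
have KD := Kdom _ (fun _ => gz) KS Hle.
have E : (fun _ : G => gz) @` (F @` [set g | forall i, As i (g i)]) `\` [set gz] = set0.
  apply/seteqP; split=> [y [[h _ <-] nz] | y []] //.
  by exfalso; apply: nz.
by apply: K0; rewrite -E; exact: K00 _ KD.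
Qed.

End S.

Theorem mainTheorem3 (Omega : Type) (R : realType) (HOmega : inhabited Omega)
  (A : set (set (gamble Omega R))) :
  (~ Ext A set0 ->
     coherent (Ext A) /\ A `<=` Ext A /\
     (forall K : set (set (gamble Omega R)), coherent K -> A `<=` K -> Ext A `<=` K)) /\
  (Ext A set0 ->
     ~ exists K : set (set (gamble Omega R)), coherent K /\ A `<=` K).
Proof.
split; last exact: Ext_empty.
move=> nE; split; last split.
- split=> //; split; first exact: Ext_K0.
  split; first exact: Ext_Kpos.
  split; first exact: Ext_Ksup.
  split; first exact: Ext_Kdom.
  exact: Ext_Kadd.
- exact: Ext_incl.
- move=> K cK AK; exact: Ext_min HOmega A K cK AK.
Qed.
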